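(* Let $X=X(\Delta)$ be a smooth projective toric variety. The pseudo-effective cone $\overline{\operatorname{Eff}}(X)\subset\operatorname{Pic}(X)_{\mathbb{R}}$ is simplicial if and only if there exists a maximal cone $\sigma_0\in\Delta$ such that every ray in $\Delta(1)\setminus\sigma_0(1)$ is a linear combination of the rays in $\sigma_0(1)$ with non-positive coefficients.
   Context: Rays are identified with their primitive generators in the lattice $N$; $\sigma(1)$ is the set of rays of a cone $\sigma$. The pseudo-effective cone is the closed cone generated by effective divisor classes (for toric $X$, by the classes of the torus-invariant prime divisors). *)

(* Defs.v *)
From HB Require Import structures.
From mathcomp Require Import all_boot all_order all_algebra.
From mathcomp Require Import reals.
Set Implicit Arguments. Unset Strict Implicit. Unset Printing Implicit Defensive.
Import Order.TTheory GRing.Theory Num.Theory.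
Local Open Scope ring_scope.

(* Lattice N = Z^n.  The rays of the fan are indexed by 'I_r; ray i has
   primitive generator  v i : 'I_n -> int.  A cone of the fan is recorded
   by the set of (indices of) its rays, so the fan is Delta : {set {set 'I_r}}
   and sigma(1) = sigma. *)

Section Toric.
Variables (R : realType) (n r : nat) (v : 'I_r -> 'I_n -> int).

Definition in_cone (sigma : {set 'I_r}) (x : 'I_n -> R) : Prop :=
  exists c : 'I_r -> R, (forall i, 0 <= c i) /\
    forall l, x l = \sum_(i in sigma) c i * (v i l)%:~R.

Definition smooth_cone (sigma : {set 'I_r}) : Prop :=
  exists B : 'M[int]_n, B \in unitmx /\
    forall i, i \in sigma -> exists k : 'I_n, forall l, B k l = v i l.

(* Delta is a fan whose set of rays Delta(1) is exactly {v i | i : 'I_r}. *)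
Definition is_fan (Delta : {set {set 'I_r}}) : Prop :=
  [/\ injective v,
      (forall i, [set i] \in Delta),
      (forall sigma tau : {set 'I_r}, sigma \in Delta -> tau \subset sigma -> tau \in Delta),
      (forall sigma : {set 'I_r}, sigma \in Delta ->
         forall c : 'I_r -> R,
           (forall l, \sum_(i in sigma) c i * (v i l)%:~R = 0) ->
           forall i, i \in sigma -> c i = 0)
    & (forall (sigma tau : {set 'I_r}) (x : 'I_n -> R), sigma \in Delta -> tau \in Delta ->
         in_cone sigma x -> in_cone tau x -> in_cone (sigma :&: tau) x)].

Definition smooth_fan (Delta : {set {set 'I_r}}) : Prop :=
  forall sigma : {set 'I_r}, sigma \in Delta -> smooth_cone sigma.

Definition complete_fan (Delta : {set {set 'I_r}}) : Prop :=
  forall x : 'I_n -> R, exists2 sigma, sigma \in Delta & in_cone sigma x.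

Definition maximal_cone (Delta : {set {set 'I_r}}) (sigma : {set 'I_r}) : Prop :=
  sigma \in Delta /\ forall tau : {set 'I_r}, tau \in Delta -> sigma \subset tau -> tau = sigma.

(* X(Delta) is projective: there is a torus-invariant divisor sum_i a_i D_i
   whose support function is strictly convex (i.e. it is ample). *)
Definition projective_fan (Delta : {set {set 'I_r}}) : Prop :=
  exists a : 'I_r -> R, forall sigma : {set 'I_r}, maximal_cone Delta sigma ->
    exists m : 'I_n -> R,
      (forall i, i \in sigma -> \sum_l m l * (v i l)%:~R = - a i) /\
      (forall j, j \notin sigma -> \sum_l m l * (v j l)%:~R > - a j).

(* Pic(X)_R = R^{Delta(1)} / M_R, where m in M_R maps to (<m, v_i>)_i.
   We work with representatives x : 'I_r -> R (the divisor sum_i x_i D_i). *)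
Definition lin_equiv (x y : 'I_r -> R) : Prop :=
  exists m : 'I_n -> R, forall i, x i - y i = \sum_l m l * (v i l)%:~R.

(* Pseudo-effective cone: the (closed) cone generated by the classes [D_i]. *)
Definition pseff (x : 'I_r -> R) : Prop :=
  exists2 c : 'I_r -> R, (forall i, 0 <= c i) & lin_equiv x c.

Definition pseff_simplicial : Prop :=
  exists (k : nat) (w : 'I_k -> 'I_r -> R),
    (forall c : 'I_k -> R,
        lin_equiv (fun i => \sum_j c j * w j i) (fun _ => 0) ->
        forall j, c j = 0) /\
    (forall x, pseff x <->
       exists2 c : 'I_k -> R, (forall j, 0 <= c j) &
         lin_equiv x (fun i => \sum_j c j * w j i)).

End Toric.

(* Main.v *)
Require Import Defs.
From HB Require Import structures.
From mathcomp Require Import all_boot all_order all_algebra.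
From mathcomp Require Import reals.
From Stdlib Require Import ClassicalEpsilon FunctionalExtensionality.
Import Order.TTheory GRing.Theory Num.Theory.
Local Open Scope ring_scope.

Set Implicit Arguments. Unset Strict Implicit. Unset Printing Implicit Defensive.

Lemma choiceT (A B : Type) (P : A -> B -> Prop) :
  (forall a, exists b, P a b) -> exists f, forall a, P a (f a).
Proof.
move=> H; exists (fun a => proj1_sig (constructive_indefinite_description _ (H a))).
by move=> a; exact: (proj2_sig (constructive_indefinite_description _ (H a))).
Qed.

Section H.
Variables (R : realType) (n r : nat) (v : 'I_r -> 'I_n -> int).

Local Notation vR i l := ((v i l)%:~R : R).
Definition dotv (m : 'I_n -> R) (i : 'I_r) : R := \sum_l m l * vR i l.
Local Notation LE := (@lin_equiv R n r v).

Lemma lin_refl x : LE x x.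
Proof. by exists (fun _ => 0) => i; rewrite subrr big1 // => l _; rewrite mul0r. Qed.

Lemma lin_sym x y : LE x y -> LE y x.
Proof.
case=> m Hm; exists (fun l => - m l) => i.
rewrite -opprB Hm -sumrN; apply: eq_bigr => l _; by rewrite mulNr.
Qed.

Lemma lin_trans x y z : LE x y -> LE y z -> LE x z.
Proof.
case=> m1 H1 [m2 H2]; exists (fun l => m1 l + m2 l) => i.
have -> : x i - z i = (x i - y i) + (y i - z i) by rewrite addrA subrK.
rewrite H1 H2 -big_split /=; apply: eq_bigr => l _; by rewrite mulrDl.
Qed.

Lemma lin_ext x y x' y' : x =1 x' -> y =1 y' -> LE x y -> LE x' y'.
Proof. by move=> ex ey [m Hm]; exists m => i; rewrite -ex -ey Hm. Qed.

Lemma lin_comb (I : finType) (c : I -> R) (x y : I -> 'I_r -> R) :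
  (forall j, LE (x j) (y j)) ->
  LE (fun i => \sum_j c j * x j i) (fun i => \sum_j c j * y j i).
Proof.
move=> H; have [m Hm] := choiceT H.
exists (fun l => \sum_j c j * m j l) => i.
rewrite -sumrB.
under eq_bigr => j _ do rewrite -mulrBr Hm mulr_sumr.
rewrite exchange_big /=; apply: eq_bigr => l _; rewrite mulr_suml.
by apply: eq_bigr => j _; rewrite mulrA.
Qed.

Lemma lin_scale (a : R) x y : LE x y ->
  LE (fun i => a * x i) (fun i => a * y i).
Proof.
case=> m Hm; exists (fun l => a * m l) => i.
by rewrite -mulrBr Hm mulr_sumr; apply: eq_bigr => l _; rewrite mulrA.
Qed.

Lemma lin_sub0 x y : LE x y -> LE (fun i => x i - y i) (fun _ => 0).
Proof. by case=> m Hm; exists m => i; rewrite subr0 Hm. Qed.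

Lemma dot_comb (m : 'I_n -> R) (A : {pred 'I_r}) (c : 'I_r -> R) :
  \sum_l m l * (\sum_(i in A) c i * vR i l) = \sum_(i in A) c i * dotv m i.
Proof.
under eq_bigr => l _ do rewrite mulr_sumr.
rewrite exchange_big /=; apply: eq_bigr => i _; rewrite /dotv mulr_sumr.
by apply: eq_bigr => l _; rewrite mulrCA.
Qed.

Lemma dot_summ (A : {pred 'I_r}) (c : 'I_r -> R) (M : 'I_r -> 'I_n -> R) t :
  dotv (fun l => \sum_(i in A) c i * M i l) t = \sum_(i in A) c i * dotv (M i) t.
Proof.
rewrite /dotv; under eq_bigr => l _ do rewrite mulr_suml.
rewrite exchange_big /=; apply: eq_bigr => i _; rewrite mulr_sumr.
by apply: eq_bigr => l _; rewrite mulrA.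
Qed.

Lemma complete_zero Delta (m : 'I_n -> R) : complete_fan R v Delta ->
  (forall i, dotv m i = 0) -> forall l, m l = 0.
Proof.
move=> Hc Hm.
have [sigma _ [c [_ Hx]]] := Hc m.
have H0 : \sum_l m l * m l = 0.
  rewrite (eq_bigr (fun l => m l * \sum_(i in sigma) c i * vR i l)); last first.
    by move=> l _; rewrite {2}Hx.
  by rewrite dot_comb big1 // => i _; rewrite Hm mulr0.
move=> l; have /psumr_eq0P H := H0.
have /eqP := H (fun l _ => ltac:(by rewrite -expr2 sqr_ge0)) l isT.
by rewrite mulf_eq0 orbb => /eqP.
Qed.

Lemma sum_delta (I : finType) (f : I -> R) j : \sum_i f i * (j == i)%:R = f j.
Proof.
rewrite (bigD1 j) //= eqxx mulr1 big1 ?addr0 // => i ne.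
by rewrite eq_sym (negbTE ne) mulr0.
Qed.

Lemma sum_deltaL (I : finType) (f : I -> R) j : \sum_i (j == i)%:R * f i = f j.
Proof. by rewrite -[RHS](sum_delta f j); apply: eq_bigr => i _; rewrite mulrC. Qed.

Lemma sum_inj_delta k (g : 'I_k -> 'I_r) (f : 'I_k -> R) l0 : injective g ->
  \sum_l f l * (g l0 == g l)%:R = f l0.
Proof.
move=> ginj; rewrite -[RHS](sum_delta f l0); apply: eq_bigr => l _.
by rewrite (inj_eq ginj).
Qed.

Lemma sum_out_delta k (g : 'I_k -> 'I_r) (f : 'I_k -> R) t : (forall l, t != g l) ->
  \sum_l f l * (t == g l)%:R = 0.
Proof. by move=> H; apply: big1 => l _; rewrite (negbTE (H l)) mulr0. Qed.

Lemma forward (Delta : {set {set 'I_r}}) :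
  is_fan R v Delta -> complete_fan R v Delta -> pseff_simplicial R v ->
  exists sigma0 : {set 'I_r}, maximal_cone Delta sigma0 /\
    forall j, j \notin sigma0 ->
      exists c : 'I_r -> R, (forall i, i \in sigma0 -> c i <= 0) /\
        forall l, ((v j l)%:~R : R) = \sum_(i in sigma0) c i * (v i l)%:~R.
Proof.
move=> Hfan Hc [k [w [Hind Heq]]].
pose e (i t : 'I_r) : R := (t == i)%:R.
have He : forall i, exists a : 'I_k -> R, (forall j, 0 <= a j) /\
    LE (e i) (fun t => \sum_j a j * w j t).
  move=> i; have [|a Ha1 Ha2] := (Heq (e i)).1.
    by exists (e i) => [t|]; [rewrite /e ler0n | apply: lin_refl].
  by exists a.
have [a Ha] := choiceT He.
have Hw : forall j, exists b : 'I_r -> R, (forall i, 0 <= b i) /\ LE (w j) b.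
  move=> j; have [|b Hb1 Hb2] := (Heq (w j)).2.
    exists (fun l => (j == l)%:R) => [l|]; first by rewrite ler0n.
    by apply: lin_ext (lin_refl (w j)) => // t; rewrite sum_deltaL.
  by exists b.
have [b Hb] := choiceT Hw.
have HBA : forall j l, \sum_i b j i * a i l = (j == l)%:R.
  move=> j l.
  have H1 : LE (w j) (fun t => \sum_l0 (\sum_i b j i * a i l0) * w l0 t).
    apply: lin_trans (Hb j).2 _.
    have H2 := lin_comb (b j) (fun i => (Ha i).2).
    apply: lin_ext H2 => t; first by rewrite /e sum_delta.
    under eq_bigr => i _ do rewrite mulr_sumr.
    rewrite exchange_big /=; apply: eq_bigr => l0 _; rewrite mulr_suml.
    by apply: eq_bigr => i _; rewrite mulrA.
  have H3 := lin_sub0 H1.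
  pose c := fun l0 => (j == l0)%:R - \sum_i b j i * a i l0.
  have : c l = 0.
    apply: Hind; apply: lin_ext H3 => // t.
    rewrite /c; under [RHS]eq_bigr => l0 _ do rewrite mulrBl.
    by rewrite sumrB sum_deltaL.
  by rewrite /c => /eqP; rewrite subr_eq0 => /eqP <-.
have Hp : forall l, exists i, 0 < b l i * a i l.
  move=> l; case: (boolP [exists i, 0 < b l i * a i l]) => [/existsP[i Hi]|/existsPn H].
    by exists i.
  exfalso; have : \sum_i b l i * a i l = 0.
    apply: big1 => i _; have := H i.
    have : 0 <= b l i * a i l by rewrite mulr_ge0 // ?(Hb l).1 ?(Ha i).1.
    by rewrite le0r => /orP[/eqP -> //| ->].
  by rewrite HBA eqxx => /eqP; rewrite oner_eq0.
have [p Hpp] := choiceT Hp.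
have Hpos : forall l, 0 < b l (p l) /\ 0 < a (p l) l.
  move=> l; have h1 := (Hb l).1 (p l); have h2 := (Ha (p l)).1 l.
  have := Hpp l; rewrite lt0r => /andP[H _].
  split; rewrite lt0r ?h1 ?h2 andbT; apply: contraNneq H => ->;
    by rewrite ?mul0r ?mulr0.
have Hzero : forall l l', l != l' -> a (p l) l' = 0.
  move=> l l' ne; have := HBA l l'; rewrite (negbTE ne) => /psumr_eq0P H.
  have /eqP := H (fun i _ => mulr_ge0 ((Hb l).1 i) ((Ha i).1 l')) (p l) isT.
  by rewrite mulf_eq0 (gt_eqF (Hpos l).1) /= => /eqP.
have pinj : injective p.
  move=> l l' E; apply/eqP; apply/negPn/negP => ne.
  have := Hzero l' l; rewrite eq_sym => /(_ ne); rewrite -E => H.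
  by have := (Hpos l).2; rewrite H ltxx.
have Hep : forall l, LE (e (p l)) (fun t => a (p l) l * w l t).
  move=> l; apply: lin_trans (Ha (p l)).2 _; apply: lin_ext (lin_refl _) => // t.
  rewrite (bigD1 l) //= big1 ?addr0 // => j ne.
  by rewrite Hzero ?mul0r // eq_sym.
pose al := fun l => (a (p l) l)^-1.
have Hwp : forall l, LE (w l) (fun t => al l * e (p l) t).
  move=> l; apply: lin_sym; apply: lin_ext (lin_scale (al l) (Hep l)) => [t //|t].
  by rewrite mulrA mulVf ?mul1r // gt_eqF // (Hpos l).2.
pose beta := fun i l => a i l * al l.
have Hbeta0 : forall i l, 0 <= beta i l.
  by move=> i l; rewrite mulr_ge0 ?(Ha i).1 // invr_ge0 ltW // (Hpos l).2.
have Hbeta : forall i, exists m, forall t,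
    e i t - \sum_l beta i l * e (p l) t = dotv m t.
  move=> i; have : LE (e i) (fun t => \sum_l beta i l * e (p l) t).
    apply: lin_trans (Ha i).2 _.
    apply: lin_ext (lin_comb (a i) Hwp) => [t //|t].
    by apply: eq_bigr => l _; rewrite mulrA.
  by case=> m Hm; exists m.
have [M HM] := choiceT Hbeta.
pose J := [set p l | l : 'I_k].
pose S := ~: J.
have HnJ : forall t, t \in S -> forall l, t != p l.
  move=> t; rewrite /S in_setC => Ht l; apply: contraNneq Ht => ->.
  by apply/imsetP; exists l.
have HMS : forall i t, i \in S -> t \in S -> dotv (M i) t = (t == i)%:R.
  move=> i t _ Ht; rewrite -HM /e sum_out_delta ?subr0 //; exact: HnJ.
have HMJ : forall i l, i \in S -> dotv (M i) (p l) = - beta i l.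
  move=> i l Hi; rewrite -HM /e sum_inj_delta //.
  by rewrite eq_sym (negbTE (HnJ i Hi l)) sub0r.
have sumS : forall i, i \in S -> forall d : 'I_r -> R,
    \sum_(i0 in S) d i0 * dotv (M i) i0 = d i.
  move=> i Hi d; rewrite (eq_bigr (fun i0 => d i0 * (i0 == i)%:R)) => [|i0 Hi0];
    last by rewrite HMS.
  rewrite (bigD1 i) //= eqxx mulr1 big1 ?addr0 // => i0 /andP[_ ne].
  by rewrite (negbTE ne) mulr0.
have key : forall m, (forall i, i \in S -> dotv m i = 0) -> forall l, m l = 0.
  move=> m Hm; apply: (complete_zero Hc) => t.
  have Hy : LE (dotv m) (fun _ => 0) by exists m => i; rewrite subr0.
  have Hy2 : dotv m =1 (fun t => \sum_j dotv m (p j) * e (p j) t).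
    move=> t0; case: (boolP (t0 \in S)) => Ht0.
      by rewrite Hm // /e sum_out_delta //; exact: HnJ.
    move: Ht0; rewrite /S in_setC negbK => /imsetP [j _ ->].
    by rewrite /e sum_inj_delta.
  have Hy3 : LE (fun t => \sum_j (dotv m (p j) * a (p j) j) * w j t) (fun _ => 0).
    apply: lin_trans (lin_sym _) Hy.
    apply: lin_ext (lin_comb (fun j => dotv m (p j)) Hep) => [t0|t0].
      by rewrite Hy2.
    by apply: eq_bigr => j _; rewrite mulrA.
  have Hc0 := Hind _ Hy3.
  rewrite Hy2; apply: big1 => j _; have /eqP := Hc0 j.
  by rewrite mulf_eq0 (gt_eqF (Hpos j).2) orbF => /eqP ->; rewrite mul0r.
have span : forall j, exists d : 'I_r -> R,
    forall l, vR j l = \sum_(i in S) d i * vR i l.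
  move=> j.
  pose V : 'M[R]_(r, n) := \matrix_(i, l) (if i \in S then vR i l else 0).
  have HV : row_full V.
    have : row_free V^T.
      apply: inj_row_free => u Hu; apply/rowP => l; rewrite mxE.
      apply: (key (fun l => u 0 l)) => i Hi.
      have := congr1 (fun N : 'rV[R]_r => N 0 i) Hu; rewrite !mxE => <-.
      by apply: eq_bigr => l0 _; rewrite !mxE Hi.
    by rewrite /row_free /row_full mxrank_tr.
  have /submxP [D HD] := submx_full (\row_l vR j l) HV.
  exists (fun i => D 0 i) => l.
  have := congr1 (fun N : 'rV[R]_n => N 0 l) HD; rewrite !mxE => ->.
  rewrite [RHS]big_mkcond /=; apply: eq_bigr => i _; rewrite mxE.
  by case: ifP => _; rewrite ?mulr0.
have coef : forall j d, (forall l, vR j l = \sum_(i in S) d i * vR i l) ->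
    forall i, i \in S -> d i = dotv (M i) j.
  move=> j d Hd i Hi; rewrite /dotv; under eq_bigr => l _ do rewrite Hd.
  by rewrite dot_comb sumS.
have SDelta : S \in Delta.
  pose x := fun l => \sum_(i in S) 1 * vR i l.
  have [tau Htau [c [Hc0 Hx]]] := Hc x.
  case: Hfan => _ _ Hsub _ _; apply: (Hsub tau) => //.
  apply/subsetP => i Hi; apply/negPn/negP => Hni.
  have E1 : \sum_l M i l * x l = 1 by rewrite dot_comb sumS.
  have E2 : \sum_l M i l * x l <= 0.
    rewrite (eq_bigr (fun l => M i l * \sum_(t in tau) c t * vR t l)) => [|l _];
      last by rewrite Hx.
    rewrite dot_comb; apply: sumr_le0 => t Ht.
    case: (boolP (t \in S)) => HtS.
      have ne : (t == i) = false by apply/negbTE; apply: contraNneq Hni => <-.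
      by rewrite HMS // ne mulr0.
    move: HtS; rewrite in_setC negbK => /imsetP[l _ ->].
    by rewrite HMJ // mulrN oppr_le0 mulr_ge0 // Hc0.
  by move: E2; rewrite E1 ler10.
have Smax : maximal_cone Delta S.
  split => // tau Htau Hsub; apply/eqP; rewrite eqEsubset Hsub andbT.
  apply/subsetP => j Hj; apply/negPn/negP => HjS.
  have [d Hd] := span j.
  case: Hfan => _ _ _ Hind4 _.
  pose c := fun i => if i == j then -1 else if i \in S then d i else 0.
  have := Hind4 tau Htau c _ j Hj; rewrite /c eqxx => H.
  suff : (-1 : R) = 0 by move/eqP; rewrite oppr_eq0 oner_eq0.
  apply: H => l; rewrite (bigD1 j) //= eqxx mulN1r.
  have -> : \sum_(i in tau | i != j) c i * vR i l = \sum_(i in S) d i * vR i l.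
    rewrite big_mkcond [RHS]big_mkcond /=.
    apply: eq_bigr => i _.
    case: (eqVneq i j) => [->|ne]; first by rewrite (negbTE HjS) andbF.
    rewrite /= andbT /c (negbTE ne); case HiS: (i \in S).
      by rewrite (subsetP Hsub i HiS).
    by case: (i \in tau); rewrite ?mul0r.
  by rewrite -Hd addNr.
exists S; split => // j Hj.
move: Hj; rewrite in_setC negbK => /imsetP [l _ ->].
have [d Hd] := span (p l); exists d; split => // i Hi.
by rewrite (coef _ _ Hd i Hi) HMJ // oppr_le0 Hbeta0.
Qed.


Lemma backward (Delta : {set {set 'I_r}}) :
  is_fan R v Delta -> smooth_fan v Delta ->
  (exists sigma0 : {set 'I_r}, maximal_cone Delta sigma0 /\
    forall j, j \notin sigma0 ->
      exists c : 'I_r -> R, (forall i, i \in sigma0 -> c i <= 0) /\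
        forall l, ((v j l)%:~R : R) = \sum_(i in sigma0) c i * (v i l)%:~R) ->
  pseff_simplicial R v.
Proof.
move=> Hfan Hsm [s0 [[Hs0 _] Hj]].
case: Hfan => vinj _ _ _ _.
have [B [Bu Hrow]] := Hsm s0 Hs0.
have Hrow' : forall i, exists ko : option 'I_n, i \in s0 ->
    exists2 kk, ko = Some kk & forall l, B kk l = v i l.
  move=> i; case: (boolP (i \in s0)) => Hi; last by exists None.
  by have [kk Hkk] := Hrow i Hi; exists (Some kk) => _; exists kk.
have [K HK] := choiceT Hrow'.
pose Mi := fun i l => if K i is Some kk then ((invmx B l kk)%:~R : R) else 0.
have HMi : forall i i', i \in s0 -> i' \in s0 -> dotv (Mi i) i' = (i' == i)%:R.
  move=> i i' Hi Hi'; have [kk Ek Hkk] := HK i Hi; have [kk' Ek' Hkk'] := HK i' Hi'.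
  rewrite /dotv /Mi Ek.
  have -> : \sum_l (invmx B l kk)%:~R * vR i' l = ((B *m invmx B) kk' kk)%:~R.
    rewrite mxE (big_morph _ (@intrD R) (mulr0z 1)); apply: eq_bigr => l _.
    by rewrite intrM mulrC Hkk'.
  rewrite mulmxV // mxE.
  have -> : (kk' == kk) = (i' == i).
    apply/eqP/eqP => [E|E].
      by apply: vinj; apply: functional_extensionality => l; rewrite -Hkk -Hkk' E.
    by move: Ek'; rewrite E Ek => -[].
  by case: (i' == i); rewrite /= ?mulr1z ?mulr0z.
have HC' : forall j, exists c : 'I_r -> R, j \notin s0 ->
    (forall i, i \in s0 -> c i <= 0) /\
    forall l, vR j l = \sum_(i in s0) c i * vR i l.
  move=> j; case: (boolP (j \in s0)) => Hjs; first by exists (fun _ => 0).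
  by have [c Hc] := Hj j Hjs; exists c.
have [C HC] := choiceT HC'.
have HMC : forall i j, i \in s0 -> j \notin s0 -> dotv (Mi i) j = C j i.
  move=> i j Hi Hjn; rewrite /dotv; under eq_bigr => l _ do rewrite ((HC j Hjn).2 l).
  rewrite dot_comb (eq_bigr (fun i0 => C j i0 * (i0 == i)%:R)) => [|i0 Hi0];
    last by rewrite HMi.
  rewrite (bigD1 i) //= eqxx mulr1 big1 ?addr0 // => i0 /andP[_ ne].
  by rewrite (negbTE ne) mulr0.
pose J := ~: s0.
pose ev := fun l : 'I_#|J| => enum_val l.
have evJ : forall l, ev l \notin s0.
  by move=> l; have := enum_valP l; rewrite in_setC.
have evinj : injective ev := @enum_val_inj _ _.
have evout : forall t, t \in s0 -> forall l, t != ev l.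
  by move=> t Ht l; apply: contraTneq Ht => ->; exact: evJ.
have evin : forall t, t \notin s0 -> exists l0, t = ev l0.
  move=> t Ht; have Ht' : t \in J by rewrite in_setC.
  by exists (enum_rank_in Ht' t); rewrite /ev enum_rankK_in.
pose w := fun (l : 'I_#|J|) (t : 'I_r) => ((t == ev l)%:R : R).
exists #|J|, w; split.
  move=> c [m Hm] j.
  have H0 : forall i, i \in s0 -> dotv m i = 0.
    by move=> i Hi; rewrite /dotv -Hm /w sum_out_delta ?subr0 //; exact: evout.
  have H1 : forall t, dotv m t = 0.
    move=> t; case: (boolP (t \in s0)) => Ht; first exact: H0.
    rewrite /dotv; under eq_bigr => l _ do rewrite ((HC t Ht).2 l).
    by rewrite dot_comb big1 // => i Hi; rewrite H0 // mulr0.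
  by have := Hm (ev j); rewrite subr0 /w sum_inj_delta // => ->; exact: H1.
move=> x; split.
  case=> c0 Hc0 Hx.
  pose m := fun l => \sum_(i in s0) c0 i * Mi i l.
  pose y := fun t => c0 t - dotv m t.
  have Hy0 : forall t, t \in s0 -> y t = 0.
    move=> t Ht; rewrite /y dot_summ (eq_bigr (fun i => c0 i * (t == i)%:R)) => [|i Hi];
      last by rewrite HMi.
    rewrite (bigD1 t) //= eqxx mulr1 big1 ?addr0 ?subrr // => i /andP[_ ne].
    by rewrite eq_sym (negbTE ne) mulr0.
  have Hy1 : forall t, t \notin s0 -> 0 <= y t.
    move=> t Ht; rewrite /y dot_summ subr_ge0; apply: le_trans (Hc0 t).
    apply: sumr_le0 => i Hi; rewrite HMC // mulr_ge0_le0 // ?Hc0 //.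
    exact: (HC t Ht).1.
  exists (fun l => y (ev l)); first by move=> l; apply: Hy1.
  apply: lin_trans Hx _.
  have Hcy : LE c0 y.
    by exists m => t; rewrite /y opprB addrC subrK.
  apply: lin_ext Hcy => [t //|t].
  case: (boolP (t \in s0)) => Ht.
    by rewrite Hy0 // /w sum_out_delta //; exact: evout.
  have [l0 ->] := evin t Ht.
  by rewrite /w sum_inj_delta.
case=> c Hc Hx; exists (fun t => \sum_l c l * w l t) => [t|//].
by apply: sumr_ge0 => l _; rewrite mulr_ge0 ?ler0n.
Qed.

End H.

Unset Implicit Arguments.

Theorem lemma6p2 (R : realType) (n r : nat) (v : 'I_r -> 'I_n -> int)
    (Delta : {set {set 'I_r}})
    (Hfan : is_fan R v Delta) (Hsmooth : smooth_fan v Delta)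
    (Hcomplete : complete_fan R v Delta) (Hproj : projective_fan R v Delta) :
  pseff_simplicial R v <->
  exists sigma0 : {set 'I_r}, maximal_cone Delta sigma0 /\
    forall j, j \notin sigma0 ->
      exists c : 'I_r -> R, (forall i, i \in sigma0 -> c i <= 0) /\
        forall l, ((v j l)%:~R : R) = \sum_(i in sigma0) c i * (v i l)%:~R.
Proof.
split; first exact: forward Hfan Hcomplete.
exact: backward Hfan Hsmooth.
Qed.
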